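(* For any positive integers $n$ and $m\ge 2$ and any $\sigma_1^2,\dots,\sigma_n^2>0$, $\mathrm{Ent}(\sigma^2_{G^{r}})\le 8\ln(m)$.
   Context: For a vector $a=(a_i)_{i\in S}$ with nonnegative entries and positive sum, $\mathrm{Ent}(a)=-\sum_i\hat a_i\ln\hat a_i$ with $\hat a_i=a_i/\sum_j a_j$. For $S\subset[n]$, $\sigma^2_S=(\sigma_i^2)_{i\in S}$. Let $\underline\sigma^2=\min_i\sigma_i^2$ and for $j=1,\dots,k$ (covering $[n]$) let $G_j=\{i\in[n]:2^{j-1}\le\sigma_i^2/\underline\sigma^2<2^j\}$. For each $j$ with $|G_j|\le 2m$ set $G'_j=G_j$; for each $j$ with $|G_j|>2m$ choose $G'_j\subset G_j$ with $|G'_j|=2m$; $G^{r}=\bigcup_jG'_j$, where the choices of the $G'_j$ are made so that $\mathrm{Ent}(\sigma^2_{G^{r}})$ is maximized. *)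

(* Defs.v *)
From HB Require Import structures.
From mathcomp Require Import all_boot all_order all_algebra.
From mathcomp Require Import boolp reals exp.
Set Implicit Arguments. Unset Strict Implicit. Unset Printing Implicit Defensive.
Import Order.TTheory GRing.Theory Num.Theory.
Local Open Scope ring_scope.

Section Defs.
Variables (R : realType) (n : nat).

Definition Ent (S : {set 'I_n}) (a : 'I_n -> R) : R :=
  let s := \sum_(i in S) a i in
  - \sum_(i in S) (a i / s) * ln (a i / s).

Definition Gj (sigma2 : 'I_n -> R) (smin : R) (j : nat) : {set 'I_n} :=
  [set i | ((2:R) ^+ j.-1 <= sigma2 i / smin) && (sigma2 i / smin < (2:R) ^+ j)].

Definition admissible (m : nat) (sigma2 : 'I_n -> R) (smin : R)
    (Gp : nat -> {set 'I_n}) : Prop :=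
  forall j : nat, (0 < j)%N ->
    [/\ Gp j \subset Gj sigma2 smin j,
        (#|Gj sigma2 smin j| <= 2 * m)%N -> Gp j = Gj sigma2 smin j &
        (2 * m < #|Gj sigma2 smin j|)%N -> #|Gp j| = (2 * m)%N].

Definition Gr (Gp : nat -> {set 'I_n}) : {set 'I_n} :=
  [set i | `[< exists j : nat, (0 < j)%N /\ i \in Gp j >]].

End Defs.

(* Main.v *)
Require Import Defs.
From HB Require Import structures.
From mathcomp Require Import all_boot all_order all_algebra.
From mathcomp Require Import boolp reals exp.
From mathcomp Require Import ring lra zify.
Import Order.TTheory GRing.Theory Num.Theory.
Local Open Scope ring_scope.

Lemma geom_half (R : realType) N :
  \sum_(d < N) (2^-1 : R) ^+ d.+1 + (2^-1) ^+ N = 1.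
Proof.
elim: N => [|N IH]; first by rewrite big_ord0 add0r expr0.
rewrite big_ord_recr /= -addrA -[X in _ = X]IH; congr (_ + _).
rewrite exprS; lra.
Qed.

Lemma tail_half (R : realType) N D :
  \sum_(d < N) (2^-1 : R) ^+ d * ((d - D)%N)%:R
   + 2 * ((N - D)%N.+1)%:R * (2^-1) ^+ (maxn N D) = 2 * (2^-1) ^+ D.
Proof.
elim: N => [|N IH]; first by rewrite big_ord0 add0r sub0n max0n mulr1.
rewrite big_ord_recr /= -addrA -[X in _ = X]IH; congr (_ + _).
case: (leqP D N) => hDN.
  have -> : maxn N.+1 D = N.+1 by lia.
  have -> : (N.+1 - D)%N = (N - D).+1 by lia.
  by rewrite exprS -!natr1; field.
have -> : maxn N.+1 D = D by lia.
have -> : (N.+1 - D)%N = 0%N by lia.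
have -> : (N - D)%N = 0%N by lia.
by rewrite mulr0 add0r.
Qed.

Lemma tail_half_le (R : realType) N D :
  \sum_(d < N) (2^-1 : R) ^+ d * ((d - D)%N)%:R <= 2 * (2^-1) ^+ D.
Proof.
rewrite -(tail_half R N D) lerDl; apply: mulr_ge0 => //.
by apply: mulr_ge0.
by apply: exprn_ge0; rewrite invr_ge0.
Qed.

Lemma gibbs (R : realType) n (S : {set 'I_n}) (a w : 'I_n -> R) :
  (forall i, i \in S -> 0 < a i) -> (forall i, i \in S -> 0 < w i) ->
  \sum_(i in S) w i <= 1 ->
  Ent S a <= - \sum_(i in S) (a i / \sum_(j in S) a j) * ln (w i).
Proof.
move=> ha hw hsw; rewrite /Ent.
set s := \sum_(j in S) a j.
case: (set_0Vmem S) => [-> | [i0 i0S]]; first by rewrite !big_set0 oppr0.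
have s0 : 0 < s.
  rewrite /s (bigD1 i0) //=; apply: (lt_le_trans (ha _ i0S)); rewrite lerDl.
  by apply: sumr_ge0 => i /andP[iS _]; apply/ltW/ha.
rewrite lerN2 -subr_ge0 -sumrB.
have key : forall i, i \in S ->
  (a i / s) * ln (a i / s) - (a i / s) * ln (w i) >= a i / s - w i.
  move=> i iS; have p0 : 0 < a i / s by apply: divr_gt0 => //; exact: ha.
  have w0 := hw i iS.
  have r0 : 0 < w i / (a i / s) by apply: divr_gt0.
  have h := @le_ln1Dx R (w i / (a i / s) - 1).
  have h1 : -1 < w i / (a i / s) - 1 by lra.
  move: (h h1); rewrite addrCA subrr addr0 ln_div ?posrE // => hle.
  have := ler_wpM2l (ltW p0) hle.
  rewrite mulrBr mulrBr mulrCA divff ?gt_eqF // mulr1 mulr1 => hh; lra.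
apply: le_trans (ler_sum _ key).
rewrite sumrB -mulr_suml divff ?gt_eqF //; lra.
Qed.

Lemma group_sum (R : realType) n (S : {set 'I_n}) (d : 'I_n -> nat) N c
  (F : nat -> R) :
  (forall k, 0 <= F k) -> (forall i, i \in S -> (d i < N)%N) ->
  (forall k, (#|[set i in S | d i == k]| <= c)%N) ->
  \sum_(i in S) F (d i) <= c%:R * \sum_(k < N) F k.
Proof.
move=> F0 dN cnt.
case: N dN => [|N] dN.
  by rewrite big1 ?big_ord0 ?mulr0 // => i iS; have := dN i iS.
rewrite (partition_big (fun i => inord (d i) : 'I_N.+1) predT) //=.
rewrite mulr_sumr; apply: ler_sum => k _.
rewrite (eq_bigr (fun _ => F k)); last first.
  by move=> i /andP[iS /eqP <-]; rewrite inordK //; exact: dN.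
rewrite sumr_const -[F k *+ _]mulr_natl; apply: ler_wpM2r => //; rewrite ler_nat.
apply: leq_trans (cnt k); apply: subset_leq_card; apply/subsetP => i.
rewrite !inE => /andP[iS /eqP hk]; rewrite iS /=.
by rewrite -hk inordK //; exact: dN.
Qed.

Lemma nat_choice m : (2 <= m)%N -> exists D, (8 * m <= 2 ^ D)%N /\ (8 * m * 2 ^ D <= m ^ 8)%N.
Proof.
move=> hm; case: (ltnP 2 m) => h3; last first.
  have -> : m = 2%N by lia.
  by exists 4%N.
set t := trunc_log 2 (8 * m).
have h1 := trunc_logP (isT : (1 < 2)%N) (_ : (0 < 8 * m)%N).
have h2 := trunc_log_ltn (8 * m) (isT : (1 < 2)%N).
exists t.+1; split; first by apply: ltnW.
have hp : (2 ^ t.+1 <= 16 * m)%N by rewrite expnS; have := h1 (_ : 0 < 8 * m)%N; rewrite -/t; lia.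
have h6 : (3 ^ 6 <= m ^ 6)%N by rewrite leq_exp2r.
have -> : (m ^ 8 = m * m * m ^ 6)%N by rewrite !expnS expn0; lia.
have : (8 * m * 2 ^ t.+1 <= 8 * m * (16 * m))%N by rewrite leq_mul2l hp orbT.
move=> h; apply: leq_trans h _.
rewrite (_ : 3 ^ 6 = 729)%N // in h6.
nia.
Qed.

Theorem lemma1 (R : realType) (n m : nat) (hn : (0 < n)%N) (hm : (2 <= m)%N)
    (sigma2 : 'I_n -> R) (hpos : forall i, 0 < sigma2 i)
    (smin : R) (hmin_att : exists i, sigma2 i = smin)
    (hmin_le : forall i, smin <= sigma2 i)
    (Gp : nat -> {set 'I_n})
    (hadm : admissible m sigma2 smin Gp)
    (hmax : forall Gq : nat -> {set 'I_n}, admissible m sigma2 smin Gq ->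
        Ent (Gr Gq) sigma2 <= Ent (Gr Gp) sigma2) :
  Ent (Gr Gp) sigma2 <= 8 * ln (m%:R).
Proof.
have smin0 : 0 < smin by case: hmin_att => i <-.
have m2 : (2:R) <= m%:R by rewrite ler_nat.
have lnm0 : 0 <= ln (m%:R : R) by apply: ln_ge0; clear -m2; lra.
set S := Gr Gp.
case: (set_0Vmem S) => [S0 | [i0 i0S]].
  by rewrite S0 /Ent !big_set0 oppr0 mulr_ge0.
have [b hb] : {b : 'I_n -> nat &
    forall i, i \in S -> (0 < b i)%N /\ i \in Gp (b i)}.
  apply: (@choice _ _ (fun i j => i \in S -> (0 < j)%N /\ i \in Gp j)) => i.
  case: (pselect (i \in S)) => iS; last by exists 0%N.
  move: iS; rewrite /S /Gr inE => /asboolP [j [j0 ij]]; by exists j.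
clearbody S.
have bnd : forall i, i \in S ->
    smin * 2 ^+ (b i).-1 <= sigma2 i /\ sigma2 i < smin * 2 ^+ b i.
  move=> i iS; have [b0 ib] := hb i iS.
  have [sub _ _] := hadm _ b0.
  have := subsetP sub _ ib; rewrite /Gj inE => /andP[l u].
  split; first by rewrite mulrC -ler_pdivlMr.
  by rewrite mulrC -ltr_pdivrMr.
set J := \max_(i in S) b i.
have [t tS bt] : {t | t \in S & J = b t}.
  by apply: eq_bigmax_cond; apply/card_gt0P; exists i0.
have bJ : forall i, i \in S -> (b i <= J)%N.
  by move=> i iS; exact: leq_bigmax_cond.
have J0 : (0 < J)%N by rewrite bt; exact: (hb t tS).1.
set r : R := 2^-1.
have r0 : 0 <= r by rewrite /r invr_ge0.
set s := \sum_(j in S) sigma2 j.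
have ts : sigma2 t <= s.
  rewrite /s (bigD1 t) //= lerDl.
  by apply: sumr_ge0 => i /andP[iS _]; apply/ltW.
have s0 : 0 < s by apply: lt_le_trans ts.
have key : forall i, i \in S -> sigma2 i <= 2 * s * r ^+ (J - b i)%N.
  move=> i iS; have [_ hi] := bnd i iS; have [ht _] := bnd t tS.
  have e : (2:R) ^+ b i = 2 * 2 ^+ J.-1 * r ^+ (J - b i)%N.
    have hJ : J = (b i + (J - b i))%N by have := bJ i iS; move=> hh; clear -hh; lia.
    rewrite -exprS prednK // {1}hJ exprD -mulrA -exprMn /r divff ?expr1n ?mulr1 // pnatr_eq0 //.
  apply: le_trans (ltW hi) _; rewrite e; rewrite -bt in ht.
  have hY : 0 <= r ^+ (J - b i)%N by apply: exprn_ge0.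
  set Y := r ^+ _ in hY *; set X := 2 ^+ J.-1 in ht *.
  have -> : smin * (2 * X * Y) = 2 * (smin * X) * Y by ring.
  apply: ler_wpM2r => //; apply: ler_wpM2l => //; exact: le_trans ht ts.
have cnt : forall k, (#|[set i in S | (J - b i)%N == k]| <= 2 * m)%N.
  move=> k; case: (posnP (J - k)) => hk.
    suff -> : [set i in S | (J - b i)%N == k] = set0 by rewrite cards0.
    apply/setP => i; rewrite !inE; apply/negbTE/negP => /andP[iS /eqP dk].
    have := (hb i iS).1; have := bJ i iS; move=> h1 h2; clear -h1 h2 dk hk; lia.
  have [sub eqc gtc] := hadm _ hk.
  have sub2 : [set i in S | (J - b i)%N == k] \subset Gp (J - k)%N.
    apply/subsetP => i; rewrite inE => /andP[iS /eqP dk].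
    have -> : (J - k)%N = b i by rewrite -dk; have := bJ i iS; move=> hh; clear -hh; lia.
    exact: (hb i iS).2.
  apply: leq_trans (subset_leq_card sub2) _.
  case: (leqP #|Gj sigma2 smin (J - k)%N| (2 * m)%N) => h.
    by rewrite (eqc h).
  by rewrite (gtc h).
have dN : forall i, i \in S -> ((J - b i)%N < J.+1)%N by move=> i _; rewrite ltnS leq_subr.
have c0 : 0 < (2 * m)%:R :> R by rewrite ltr0n; clear -hm; lia.
set w := fun i => r ^+ (J - b i)%N.+1 / (2 * m)%:R.
have F0 : forall k, 0 <= r ^+ k.+1 / (2 * m)%:R :> R.
  by move=> k; apply: divr_ge0; [exact: exprn_ge0 | exact: ltW].
have hw : \sum_(i in S) w i <= 1.
  have := @group_sum R n S (fun i => (J - b i)%N) J.+1 (2 * m)%N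
    (fun k => r ^+ k.+1 / (2 * m)%:R) F0 dN cnt.
  rewrite -!mulr_suml mulrCA divff ?gt_eqF // mulr1 => h.
  apply: le_trans h _; rewrite -(geom_half R J.+1) lerDl.
  exact: exprn_ge0.
have hw0 : forall i, i \in S -> 0 < w i.
  move=> i _; apply: divr_gt0 => //; apply: exprn_gt0; rewrite /r invr_gt0 //.
have G := @gibbs R n S sigma2 w (fun i _ => hpos i) hw0 hw.
apply: le_trans G _.
have [D [hD1 hD2]] := @nat_choice m hm.
have two0 : (0:R) < 2 by [].
set L2 := ln (2:R).
have L20 : 0 <= L2 by apply: ln_ge0; rewrite ler1n.
set Lc := ln ((2 * m)%:R : R).
have m0 : (0:R) < m%:R by rewrite ltr0n; clear -hm; lia.
have eLc : Lc = L2 + ln (m%:R) by rewrite /Lc natrM lnM ?posrE.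
have lw : forall i, i \in S -> ln (w i) = - (L2 * ((J - b i)%N.+1)%:R) - Lc.
  move=> i _; rewrite /w ln_div ?posrE //; last by apply: exprn_gt0; rewrite /r invr_gt0.
  by rewrite lnXn /r ?invr_gt0 // lnV ?posrE // mulr_natr mulNrn.
set K := L2 * (D.+1)%:R + Lc.
have step : forall i, i \in S -> - ((sigma2 i / s) * ln (w i)) <=
    (sigma2 i / s) * K + L2 * (2 * (r ^+ (J - b i)%N * ((J - b i - D)%N)%:R)).
  move=> i iS; rewrite lw //.
  have hp : sigma2 i / s <= 2 * r ^+ (J - b i)%N.
    by rewrite ler_pdivrMr // mulrAC; apply: key.
  have p0 : 0 <= sigma2 i / s by apply: divr_ge0; [exact: ltW | exact: ltW].
  have he : ((J - b i)%N.+1)%:R <= (D.+1)%:R + ((J - b i - D)%N)%:R :> R.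
    by rewrite -natrD ler_nat; clear -hm; lia.
  have h1 : 0 <= sigma2 i / s * L2 by apply: mulr_ge0.
  have h2 : 0 <= L2 * ((J - b i - D)%N)%:R by apply: mulr_ge0.
  rewrite /K.
  set p := sigma2 i / s in hp p0 h1 *.
  set Y := r ^+ _ in hp *.
  set E1 := ((J - b i)%N.+1)%:R in he *.
  set ED := ((J - b i - D)%N)%:R in he h2 *.
  have a1 := ler_wpM2l h1 he.
  have a2 := ler_wpM2l h2 hp.
  clear -a1 a2; lra.
rewrite -sumrN; apply: le_trans (ler_sum _ step) _.
rewrite big_split /= -mulr_suml -mulr_sumr -mulr_sumr.
rewrite -mulr_suml -/s divff ?gt_eqF // mul1r.
have Ft0 : forall k, 0 <= r ^+ k * ((k - D)%N)%:R :> R.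
  by move=> k; apply: mulr_ge0; [exact: exprn_ge0 | exact: ler0n].
have gs := @group_sum R n S (fun i => (J - b i)%N) J.+1 (2 * m)%N
    (fun k => r ^+ k * ((k - D)%N)%:R) Ft0 dN cnt.
have tl := tail_half_le R J.+1 D.
have rD : (8 * m)%:R * r ^+ D <= 1.
  rewrite /r exprVn -[_ * _^-1]/(_ / _) ler_pdivrMr ?exprn_gt0 // mul1r.
  by rewrite -natrX ler_nat.
have c00 : (0:R) <= (2 * m)%:R by exact: ler0n.
have hsum : \sum_(i in S) r ^+ (J - b i)%N * ((J - b i - D)%N)%:R <= (2 * m)%:R * (2 * r ^+ D).
  apply: le_trans gs _; apply: ler_wpM2l => //.
have h8 : (2:R) * ((2 * m)%:R * (2 * r ^+ D)) = (8 * m)%:R * r ^+ D.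
  by rewrite !natrM; ring.
have : L2 * (2 * \sum_(i in S) r ^+ (J - b i)%N * ((J - b i - D)%N)%:R) <= L2.
  have h := ler_wpM2l (ler0n R 2) hsum; rewrite h8 in h.
  have h' := le_trans h rD.
  by rewrite -[X in _ <= X]mulr1; apply: ler_wpM2l.
move=> hL.
apply: (@le_trans _ _ (K + L2)); first by rewrite lerD2l.
have e1 : ln ((8 * m * 2 ^ D)%N%:R : R) = L2 * (D.+3)%:R + ln (m%:R).
  have -> : (8 * m * 2 ^ D = m * 2 ^ D.+3)%N by rewrite !expnS; ring.
  by rewrite natrM natrX lnM ?posrE ?exprn_gt0 // lnXn // mulr_natr addrC.
have e2 : ln ((m ^ 8)%N%:R : R) = 8 * ln (m%:R).
  by rewrite natrX lnXn // mulr_natl.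
rewrite -e2; apply: (@le_trans _ _ (ln ((8 * m * 2 ^ D)%N%:R : R))).
  rewrite e1 /K eLc le_eqVlt; apply/orP; left; apply/eqP; rewrite -!natr1; ring.
rewrite ler_ln ?posrE ?ltr0n ?ler_nat //; clear -hm; rewrite ?expn_gt0 ?muln_gt0; lia.
Qed.
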